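(* Let $\beta\in\mathcal{B}_3$ and write $\rho_3(\beta)=\begin{pmatrix}\mathcal{R}(t)&\mathcal{V}(t)\\\mathcal{S}(t)&\mathcal{U}(t)\end{pmatrix}$. If $\mathcal{S}(t)\equiv0$ (as a Laurent polynomial), then $\beta$ belongs to the subgroup of $\mathcal{B}_3$ generated by $\sigma_1$ and $(\sigma_1\sigma_2)^3$.
   Context: $\mathcal{B}_3$ is the braid group with generators $\sigma_1,\sigma_2$ and relation $\sigma_1\sigma_2\sigma_1=\sigma_2\sigma_1\sigma_2$. The reduced Burau representation $\rho_3:\mathcal{B}_3\to\mathrm{GL}(2,\mathbb{Z}[t,t^{-1}])$ is defined by $\sigma_1\mapsto\begin{pmatrix}-t&1\\0&1\end{pmatrix}$, $\sigma_2\mapsto\begin{pmatrix}1&0\\t&-t\end{pmatrix}$, with $t$ a formal parameter. *)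

(* Defs.v *)
From HB Require Import structures.
From mathcomp Require Import all_boot all_order all_algebra fraction.
Set Implicit Arguments. Unset Strict Implicit. Unset Printing Implicit Defensive.
Import GRing.Theory.
Local Open Scope ring_scope.

Inductive gen := s1 | s2.

(* a letter (g, true) is sigma_g, (g, false) is sigma_g^{-1} *)
Definition letter := (gen * bool)%type.
Definition word := seq letter.

Definition inv_word (w : word) : word := rev (map (fun l => (l.1, ~~ l.2)) w).

(* congruence on words generated by free cancellation and the braid relation;
   word / braid_equiv is B_3 = < s1, s2 | s1 s2 s1 = s2 s1 s2 > *)
Inductive braid_equiv : word -> word -> Prop :=
| be_refl w : braid_equiv w w
| be_sym u v : braid_equiv u v -> braid_equiv v u
| be_trans u v w : braid_equiv u v -> braid_equiv v w -> braid_equiv u w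
| be_cancel u v (g : gen) (b : bool) :
    braid_equiv (u ++ [:: (g, b); (g, ~~ b)] ++ v) (u ++ v)
| be_braid u v :
    braid_equiv (u ++ [:: (s1, true); (s2, true); (s1, true)] ++ v)
                (u ++ [:: (s2, true); (s1, true); (s2, true)] ++ v).

Definition delta2 : word :=
  [:: (s1, true); (s2, true); (s1, true); (s2, true); (s1, true); (s2, true)].

(* generators of the subgroup <sigma1, (sigma1 sigma2)^3> and their inverses:
   (true, e) = sigma1^{+-1}, (false, e) = ((sigma1 sigma2)^3)^{+-1} *)
Definition sub_gen_word (x : bool * bool) : word :=
  match x with
  | (true, true) => [:: (s1, true)]
  | (true, false) => [:: (s1, false)]
  | (false, true) => delta2
  | (false, false) => inv_word delta2
  end.

Definition in_sub_s1_delta2 (w : word) : Prop :=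
  exists l : seq (bool * bool), braid_equiv w (flatten (map sub_gen_word l)).

(* Z[t,t^-1] is embedded in its fraction field Q(t) = Frac(Z[t]) *)
Definition Lau := {fraction {poly int}}.
Definition tL : Lau := tofrac ('X : {poly int}).

Definition mx2 (a b c d : Lau) : 'M[Lau]_2 :=
  \matrix_(i < 2, j < 2)
    if (i == 0 :> nat) then (if (j == 0 :> nat) then a else b)
    else (if (j == 0 :> nat) then c else d).

Definition burau_gen (g : gen) : 'M[Lau]_2 :=
  match g with
  | s1 => mx2 (- tL) 1 0 1
  | s2 => mx2 1 0 tL (- tL)
  end.

Definition burau_letter (l : letter) : 'M[Lau]_2 :=
  if l.2 then burau_gen l.1 else invmx (burau_gen l.1).

Definition rho3 (w : word) : 'M[Lau]_2 :=
  foldr (fun l M => burau_letter l *m M) 1%:M w.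

Definition burauS (w : word) : Lau := rho3 w ord_max ord0.

(* Main.v *)
Require Import Defs.
From mathcomp Require Import all_boot all_order all_algebra fraction.
From mathcomp Require Import ring zify.
From Stdlib Require Import Setoid Morphisms Lia.
Set Implicit Arguments. Unset Strict Implicit. Unset Printing Implicit Defensive.

Notation a1 := (s1, true). Notation a2 := (s2, true).
Notation A1 := (s1, false). Notation A2 := (s2, false).
Notation "u =b v" := (braid_equiv u v) (at level 70).

Lemma be_ctx p q u v : u =b v -> p ++ u ++ q =b p ++ v ++ q.
Proof.
elim=> {u v} [w|u v _ IH|u v w _ IH1 _ IH2|u v g b|u v].
- exact: be_refl.
- exact: be_sym.
- exact: be_trans IH2.
- have := be_cancel (p ++ u) (v ++ q) g b. by rewrite -!catA.
- have := be_braid (p ++ u) (v ++ q). by rewrite -!catA.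
Qed.

#[global] Hint Resolve be_refl : core.
#[global] Instance be_Equiv : Equivalence braid_equiv.
Proof. split. exact: be_refl. exact: be_sym. exact: be_trans. Qed.

#[global] Instance cat_Proper : Proper (braid_equiv ==> braid_equiv ==> braid_equiv) (@cat letter).
Proof.
move=> u u' H v v' H'.
apply: (@be_trans _ (u' ++ v)).
  exact: (be_ctx [::] v H).
by have := be_ctx u' [::] H'; rewrite !cats0.
Qed.

Lemma be_cons l u v : u =b v -> l :: u =b l :: v.
Proof. move=> H; exact: (cat_Proper (be_refl [:: l]) H). Qed.

#[global] Instance cons_Proper l : Proper (braid_equiv ==> braid_equiv) (cons l).
Proof. move=> u v; exact: be_cons. Qed.

Lemma be_canc u v g b : u ++ (g, b) :: (g, ~~ b) :: v =b u ++ v.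
Proof. exact: be_cancel u v g b. Qed.

Lemma be_br u v : u ++ a1 :: a2 :: a1 :: v =b u ++ a2 :: a1 :: a2 :: v.
Proof. exact: be_braid. Qed.

Lemma inv_word_cons l u : inv_word (l :: u) = inv_word u ++ [:: (l.1, ~~ l.2)].
Proof. by rewrite /inv_word cats1 -rev_cons. Qed.

Lemma inv_word_cat u v : inv_word (u ++ v) = inv_word v ++ inv_word u.
Proof. by rewrite /inv_word map_cat rev_cat. Qed.

Lemma inv_cancel u : u ++ inv_word u =b [::].
Proof.
elim: u => [|l u IH]; first exact: be_refl.
rewrite inv_word_cons catA.
have -> : (l :: u) ++ inv_word u = [:: l] ++ (u ++ inv_word u) by [].
rewrite IH /=.
case: l => g b. exact: (be_canc [::] [::] g b).
Qed.

Lemma inv_cancel' u : inv_word u ++ u =b [::].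
Proof.
elim/last_ind: u => [|u l IH]; first exact: be_refl.
rewrite -cats1 inv_word_cat -catA (catA (inv_word u)) IH /=.
case: l => g b /=. have := (be_canc [::] [::] g (~~ b)). by rewrite negbK.
Qed.

Lemma D21 : [:: a2; a1; a2; a1; a2; a1] =b delta2.
Proof.
apply: (@be_trans _ [:: a1; a2; a1; a1; a2; a1]).
  exact: be_sym (be_br [::] [:: a1; a2; a1]).
exact: (be_br [:: a1; a2; a1] [::]).
Qed.

Lemma cent_letter l : [:: l] ++ delta2 =b delta2 ++ [:: l].
Proof.
have pos1 : [:: a1] ++ delta2 =b delta2 ++ [:: a1].
  apply: (@be_trans _ ([:: a1] ++ [:: a2; a1; a2; a1; a2; a1])); last exact: be_refl.
  apply: cat_Proper; [exact: be_refl | exact: be_sym D21].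
have pos2 : [:: a2] ++ delta2 =b delta2 ++ [:: a2].
  exact: (cat_Proper D21 (be_refl [:: a2])).
have neg : forall g b, [:: (g, b)] ++ delta2 =b delta2 ++ [:: (g, b)] ->
   [:: (g, ~~ b)] ++ delta2 =b delta2 ++ [:: (g, ~~ b)].
  move=> g b H.
  have e1 : [:: (g, ~~ b)] ++ delta2 =b [:: (g, ~~ b)] ++ (delta2 ++ [:: (g, b)]) ++ [:: (g, ~~ b)].
    have := be_canc ([:: (g, ~~ b)] ++ delta2) [::] g b.
    rewrite cats0 -!catA /= => E; apply: be_sym; exact: E.
  rewrite e1 -H.
  have := be_canc [::] (delta2 ++ [:: (g, ~~ b)]) g (~~ b).
  by rewrite negbK.
case: l => [[] []] //.
- by have := neg s1 true pos1.
- by have := neg s2 true pos2.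
Qed.

Lemma cent_d u : delta2 ++ u =b u ++ delta2.
Proof.
elim: u => [|l u IH]; first by rewrite cats0.
have -> : delta2 ++ l :: u = (delta2 ++ [:: l]) ++ u by rewrite -catA.
by rewrite -(cent_letter l) -catA IH.
Qed.

Notation dinv := (inv_word delta2).

Lemma cent_di u : dinv ++ u =b u ++ dinv.
Proof.
have e : dinv ++ u =b dinv ++ (u ++ delta2) ++ dinv.
  by rewrite -catA inv_cancel cats0.
rewrite e -cent_d !catA inv_cancel' /=. by [].
Qed.

Definition xw : word := [:: a1; a2; a1].
Definition yw : word := [:: a1; a2].

Lemma xx : xw ++ xw =b delta2.
Proof. exact: (be_br [:: a1; a2; a1] [::]). Qed.

Lemma yyy : yw ++ yw ++ yw = delta2.
Proof. by []. Qed.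

Inductive yp := Y0 | Y1 | Y2.
Definition ypw c : word := match c with Y0 => [::] | Y1 => yw | Y2 => yw ++ yw end.
Definition blk (b : bool) : word := xw ++ (if b then yw else yw ++ yw).
Definition blw (bl : seq bool) : word := flatten (map blk bl).
Definition dsw (ds : seq bool) : word := flatten (map (fun b => sub_gen_word (false, b)) ds).
Definition nf := (yp * seq bool * bool * seq bool)%type.
Definition nfw (n : nf) : word :=
  let: (c, bl, e, ds) := n in ypw c ++ blw bl ++ (if e then xw else [::]) ++ dsw ds.

Lemma dsw_rcons ds b : dsw (rcons ds b) = dsw ds ++ sub_gen_word (false, b).
Proof. by rewrite /dsw -cats1 map_cat flatten_cat /= cats0. Qed.

Lemma nfw_d c bl e ds : nfw (c, bl, e, ds) ++ delta2 = nfw (c, bl, e, rcons ds true).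
Proof. by rewrite /= dsw_rcons !catA. Qed.

Lemma nfw_di c bl e ds : nfw (c, bl, e, ds) ++ dinv = nfw (c, bl, e, rcons ds false).
Proof. by rewrite /= dsw_rcons !catA. Qed.

Definition stepy (n : nf) : nf :=
  let: (c, bl, e, ds) := n in
  match c with Y0 => (Y1, bl, e, ds) | Y1 => (Y2, bl, e, ds) | Y2 => (Y0, bl, e, rcons ds true) end.

Lemma nfwE c bl e ds : nfw (c, bl, e, ds) = ypw c ++ blw bl ++ (if e then xw else [::]) ++ dsw ds.
Proof. by []. Qed.

Lemma stepyP n : yw ++ nfw n =b nfw (stepy n).
Proof.
case: n => [[[c bl] e] ds]; case: c; rewrite ?nfwE //.
rewrite dsw_rcons catA.
have -> : yw ++ ypw Y2 = delta2 by [].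
by rewrite cent_d -!catA.
Qed.

Definition stepx (n : nf) : nf :=
  let: (c, bl, e, ds) := n in
  match c with
  | Y1 => (Y0, true :: bl, e, ds)
  | Y2 => (Y0, false :: bl, e, ds)
  | Y0 => match bl with
          | b :: bl' => ((if b then Y1 else Y2), bl', e, rcons ds true)
          | [::] => if e then (Y0, [::], false, rcons ds true) else (Y0, [::], true, ds)
          end
  end.

Lemma blw_cons b bl : blw (b :: bl) = blk b ++ blw bl.
Proof. by []. Qed.

Lemma stepxP n : xw ++ nfw n =b nfw (stepx n).
Proof.
case: n => [[[c bl] e] ds]; case: c.
- case: bl => [|b bl].
  + case: e.
    * have -> : stepx (Y0, [::], true, ds) = (Y0, [::], false, rcons ds true) by [].
      rewrite -nfw_d !nfwE.
      have -> : ypw Y0 ++ blw [::] ++ xw ++ dsw ds = xw ++ dsw ds by [].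
      by rewrite catA xx cent_d.
    * by [].
  + have -> : stepx (Y0, b :: bl, e, ds) = ((if b then Y1 else Y2), bl, e, rcons ds true) by [].
    rewrite -nfw_d !nfwE blw_cons /blk.
    have -> : ypw Y0 = [::] by [].
    rewrite cat0s -!catA catA xx cent_d.
    case: b; by rewrite -!catA.
- by rewrite !nfwE blw_cons /blk -!catA.
- by rewrite !nfwE blw_cons /blk -!catA.
Qed.

Definition mvw (ms : seq bool) : word := flatten (map (fun m : bool => if m then xw else yw) ms).
Definition applym (ms : seq bool) (n : nf) : nf :=
  foldr (fun (m : bool) n => if m then stepx n else stepy n) n ms.

Lemma mvP ms n : mvw ms ++ nfw n =b nfw (applym ms n).
Proof.
elim: ms => [|m ms IH] //=.
rewrite -catA IH. case: m; [exact: stepxP | exact: stepyP].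
Qed.

Lemma letter_mv l : exists ms, [:: l] ++ delta2 =b mvw ms.
Proof.
case: l => [[] []].
- exists [:: false; false; true]. by rewrite cent_letter.
- exists [:: true; false]. rewrite cent_letter -xx.
  exact: (be_canc [:: a1; a2; a1; a1; a2] [::] s1 true).
- exists [:: true; false; false]. rewrite cent_letter -xx. by [].
- exists [:: false; true]. rewrite cent_letter.
  exact: (be_canc [:: a1; a2; a1; a2; a1] [::] s2 true).
Qed.

Lemma nf_exists w : exists n, w =b nfw n.
Proof.
elim: w => [|l w [n IH]]; first by exists (Y0, [::], false, [::]).
have [ms Hms] := letter_mv l.
have e : [:: l] =b mvw ms ++ dinv.
  rewrite -Hms -catA inv_cancel cats0. by [].
case E : (applym ms n) => [[[c bl] e'] ds].
exists (c, bl, e', rcons ds false).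
rewrite -nfw_di -E -mvP -catA -cent_di catA -e -IH. by [].
Qed.

Definition FS (l : seq (bool * bool)) : word := flatten (map sub_gen_word l).

Lemma FS_cat l1 l2 : FS (l1 ++ l2) = FS l1 ++ FS l2.
Proof. by rewrite /FS map_cat flatten_cat. Qed.

Lemma dsw_FS ds : dsw ds = FS (map (pair false) ds).
Proof. by rewrite /FS /dsw -map_comp. Qed.

Lemma xy_eq : xw ++ yw =b FS [:: (true, false); (false, true)].
Proof.
apply: be_sym. change ([:: A1] ++ delta2 =b xw ++ yw). rewrite cent_letter -xx.
exact: (be_canc [:: a1; a2; a1; a1; a2] [::] s1 true).
Qed.

Lemma yyx_eq : yw ++ yw ++ xw =b FS [:: (true, true); (false, true)].
Proof. apply: be_sym. change ([:: a1] ++ delta2 =b yw ++ yw ++ xw). rewrite cent_letter. by []. Qed.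

Lemma shape1 m ds : exists l, nfw (Y0, nseq m true, false, ds) =b FS l.
Proof.
exists (flatten (nseq m [:: (true, false); (false, true)]) ++ map (pair false) ds).
rewrite nfwE FS_cat -dsw_FS /=.
apply: cat_Proper => //.
elim: m => [|m IH] //=.
rewrite blw_cons (FS_cat [:: (true, false); (false, true)]) /blk IH xy_eq. by [].
Qed.

Lemma shape2 m ds : exists l, nfw (Y2, nseq m false, true, ds) =b FS l.
Proof.
exists (flatten (nseq m.+1 [:: (true, true); (false, true)]) ++ map (pair false) ds).
rewrite nfwE FS_cat -dsw_FS !catA.
apply: cat_Proper => //.
rewrite -!catA.
elim: m => [|m IH]; first exact: yyx_eq.
have -> : yw ++ yw ++ blw (nseq m.+1 false) ++ xw = (yw ++ yw ++ xw) ++ (yw ++ yw ++ blw (nseq m false) ++ xw).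
  by rewrite [nseq _ _]/= blw_cons /blk -!catA.
rewrite IH yyx_eq -FS_cat. by [].
Qed.

Import GRing.Theory.
Local Open Scope ring_scope.

Definition m4 (R : Type) := (R * R * R * R)%type.
Definition mul4 (R : comRingType) (M N : m4 R) : m4 R :=
  let: (a, b, c, d) := M in let: (a', b', c', d') := N in
  (a * a' + b * c', a * b' + b * d', c * a' + d * c', c * b' + d * d').
Definition id4 (R : comRingType) : m4 R := (1, 0, 0, 1).

Lemma mul4A (R : comRingType) (M N P : m4 R) : mul4 M (mul4 N P) = mul4 (mul4 M N) P.
Proof.
case: M => [[[a b] c] d]; case: N => [[[a' b'] c'] d']; case: P => [[[x y] z] w] /=.
congr (_, _, _, _); ring.
Qed.

Lemma mul1_4 (R : comRingType) (M : m4 R) : mul4 (id4 R) M = M.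
Proof. case: M => [[[a b] c] d] /=. congr (_, _, _, _); ring. Qed.

Definition phiL (l : letter) : m4 int :=
  match l with
  | (s1, true) => (1, 1, 0, 1)
  | (s2, true) => (1, 0, -1, 1)
  | (s1, false) => (1, -1, 0, 1)
  | (s2, false) => (1, 0, 1, 1)
  end.

Definition phi (w : word) : m4 int := foldr (fun l M => mul4 (phiL l) M) (id4 _) w.

Lemma phi_cat u v : phi (u ++ v) = mul4 (phi u) (phi v).
Proof. elim: u => [|l u IH]; first exact: (esym (mul1_4 _)). by rewrite /= IH mul4A. Qed.

Lemma phi_inv u v : u =b v -> phi u = phi v.
Proof.
elim=> {u v} [w | u v _ IH | u v w _ IH1 _ IH2 | u v g b | u v].
- by [].
- by rewrite IH.
- by rewrite IH1 IH2.
- rewrite !phi_cat; congr (mul4 _ _).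
  rewrite [LHS]/= mul4A.
  have -> : mul4 (phiL (g, b)) (phiL (g, ~~ b)) = id4 _ by case: g; case: b.
  by rewrite !mul1_4.
- rewrite !phi_cat; congr (mul4 _ _).
Qed.

Definition mI : m4 int := (-1, 0, 0, -1).

Lemma phi_dsw ds : phi (dsw ds) = id4 _ \/ phi (dsw ds) = mI.
Proof.
elim: ds => [|b ds IH]; first by left.
have -> : dsw (b :: ds) = sub_gen_word (false, b) ++ dsw ds by [].
rewrite phi_cat.
have -> : phi (sub_gen_word (false, b)) = mI by case: b.
by case: IH => ->; [right | left].
Qed.

Lemma phi_blw bl : exists (eps p q r s : int), (eps = 1 \/ eps = -1) /\
  phi (blw bl) = (eps * p, eps * q, eps * r, eps * s) /\ 1 <= p /\ 1 <= s /\ q <= 0 /\ r <= 0 /\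
  (r = 0 -> bl = nseq (size bl) true) /\ (q = 0 -> bl = nseq (size bl) false).
Proof.
elim: bl => [|b bl [eps [p [q [r [s [He [E [h1 [h2 [h3 [h4 [h5 h6]]]]]]]]]]]]].
  exists 1, 1, 0, 0, 1; split; first by left.
  split; first by rewrite !mul1r.
  by do !split.
rewrite blw_cons phi_cat E.
case: b.
- have -> : phi (blk true) = (-1, 1, 0, -1) by [].
  exists (- eps), (p - r), (q - s), r, s; split.
    by case: He => ->; [right | left; rewrite opprK].
  split; first by rewrite /mul4; congr (_,_,_,_); ring.
  do !split; try lia.
  + by move=> /h5 /= <-.
- have -> : phi (blk false) = (-1, 0, 1, -1) by [].
  exists (- eps), p, q, (r - p), (s - q); split.
    by case: He => ->; [right | left; rewrite opprK].
  split; first by rewrite /mul4; congr (_,_,_,_); ring.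
  do !split; try lia.
  + by move=> /h6 /= <-.
Qed.

Lemma c_entry (a b c d p q r s x y z w : int) :
  (mul4 (a, b, c, d) (mul4 (p, q, r, s) (x, y, z, w))).1.2 = c * (p * x + q * z) + d * (r * x + s * z).
Proof. by []. Qed.

Lemma nf_shape n : (phi (nfw n)).1.2 = 0 ->
  exists m ds, n = (Y0, nseq m true, false, ds) \/ n = (Y2, nseq m false, true, ds).
Proof.
case: n => [[[c bl] e] ds]; rewrite nfwE !phi_cat.
have [eps [p [q [r [s [He [E [h1 [h2 [h3 [h4 [h5 h6]]]]]]]]]]]] := phi_blw bl.
rewrite E.
have -> : mul4 (phi (if e then xw else [::])) (phi (dsw ds)) =
          if e then (if phi (dsw ds) == mI then (0, -1, 1, 0) else (0, 1, -1, 0))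
          else (if phi (dsw ds) == mI then mI else id4 _).
  by case: (phi_dsw ds) => ->; case: e.
have Ey : phi (ypw c) = match c with Y0 => id4 _ | Y1 => (0, 1, -1, 1) | Y2 => (-1, 1, -1, 0) end.
  by case: c.
rewrite Ey; clear Ey.
case: He => ->; case: c; case: e; case: (phi (dsw ds) == mI);
  rewrite c_entry => H; try (exfalso; lia).
all: exists (size bl), ds; first [ left; rewrite {1}h5; [by [] | lia] | right; rewrite {1}h6; [by [] | lia] ].
Qed.


Lemma mx2E a b c d : mx2 a b c d ord_max ord0 = c.
Proof. by rewrite mxE. Qed.

Lemma mx2_mul a b c d a' b' c' d' :
  mx2 a b c d *m mx2 a' b' c' d' =
  mx2 (a * a' + b * c') (a * b' + b * d') (c * a' + d * c') (c * b' + d * d').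
Proof.
apply/matrixP => i j; rewrite !mxE !big_ord_recr big_ord0 /= !mxE.
by case: i => [[|[|//]] ?]; case: j => [[|[|//]] ?]; rewrite /= add0r.
Qed.

Lemma mx2_1 : mx2 1 0 0 1 = 1%:M.
Proof.
apply/matrixP => i j; rewrite !mxE.
by case: i => [[|[|//]] ?]; case: j => [[|[|//]] ?].
Qed.

Lemma mx2_scale (k a b c d : Lau) : k *: mx2 a b c d = mx2 (k * a) (k * b) (k * c) (k * d).
Proof.
apply/matrixP => i j; rewrite !mxE.
by case: i => [[|[|//]] ?]; case: j => [[|[|//]] ?].
Qed.

Lemma invmx_eq (A B : 'M[Lau]_2) : A *m B = 1%:M -> invmx A = B.
Proof.
move=> AB; have [uA _] := mulmx1_unit AB.
by rewrite -[B](mulKmx uA) AB mulmx1.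
Qed.

Definition P := {poly int}.
Definition M2 (Q : m4 P) : 'M[Lau]_2 :=
  let: (a, b, c, d) := Q in mx2 (tofrac a) (tofrac b) (tofrac c) (tofrac d).

Lemma M2_mul Q R : M2 (mul4 Q R) = M2 Q *m M2 R.
Proof.
case: Q => [[[a b] c] d]; case: R => [[[a' b'] c'] d'].
by rewrite /= mx2_mul !tofracD !tofracM.
Qed.

Lemma M2_1 : M2 (id4 _) = 1%:M.
Proof. by rewrite /= tofrac1 tofrac0 mx2_1. Qed.

Definition QL (l : letter) : m4 P :=
  match l with
  | (s1, true) => (- 'X, 1, 0, 1)
  | (s2, true) => (1, 0, 'X, - 'X)
  | (s1, false) => (1, -1, 0, - 'X)
  | (s2, false) => (- 'X, 0, - 'X, 1)
  end.

Definition Qw (w : word) : m4 P := foldr (fun l M => mul4 (QL l) M) (id4 _) w.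
Definition kw (w : word) : nat := count (fun l : letter => ~~ l.2) w.

Lemma tL_neq0 : tL != 0.
Proof. by rewrite /tL tofrac_eq0 polyX_eq0. Qed.

Definition sc : Lau := (- tL)^-1.

Lemma fA1 (F : fieldType) (t : F) : t != 0 ->
  [/\ - t * ((- t)^-1 * 1) + 1 * ((- t)^-1 * 0) = 1,
      - t * ((- t)^-1 * -1) + 1 * ((- t)^-1 * - t) = 0,
      0 * ((- t)^-1 * 1) + 1 * ((- t)^-1 * 0) = 0 &
      0 * ((- t)^-1 * -1) + 1 * ((- t)^-1 * - t) = 1].
Proof. move=> t0; have t0' : - t != 0 by rewrite oppr_eq0. split; field; done. Qed.
Lemma fA2 (F : fieldType) (t : F) : t != 0 ->
  [/\ 1 * ((- t)^-1 * - t) + 0 * ((- t)^-1 * - t) = 1,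
      1 * ((- t)^-1 * 0) + 0 * ((- t)^-1 * 1) = 0,
      t * ((- t)^-1 * - t) + - t * ((- t)^-1 * - t) = 0 &
      t * ((- t)^-1 * 0) + - t * ((- t)^-1 * 1) = 1].
Proof. move=> t0; have t0' : - t != 0 by rewrite oppr_eq0. split; field; done. Qed.
Lemma letter_A1 : burau_letter A1 = sc ^+ 1 *: M2 (QL A1).
Proof.
rewrite expr1 /burau_letter /burau_gen /M2 /QL.
rewrite !tofracN tofrac1 tofrac0 -/tL.
apply: invmx_eq. rewrite mx2_scale mx2_mul -mx2_1 /sc.
have [e1 e2 e3 e4] := fA1 tL_neq0.
by rewrite e1 e2 e3 e4.
Qed.
Lemma letter_A2 : burau_letter A2 = sc ^+ 1 *: M2 (QL A2).
Proof.
rewrite expr1 /burau_letter /burau_gen /M2 /QL.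
rewrite !tofracN tofrac1 tofrac0 -/tL.
apply: invmx_eq. rewrite mx2_scale mx2_mul -mx2_1 /sc.
have [e1 e2 e3 e4] := fA2 tL_neq0.
by rewrite e1 e2 e3 e4.
Qed.

Lemma letter_a1 : burau_letter a1 = sc ^+ 0 *: M2 (QL a1).
Proof. by rewrite expr0 scale1r /burau_letter /burau_gen /M2 /QL tofracN tofrac1 tofrac0 /tL. Qed.
Lemma letter_a2 : burau_letter a2 = sc ^+ 0 *: M2 (QL a2).
Proof. by rewrite expr0 scale1r /burau_letter /burau_gen /M2 /QL tofracN tofrac1 tofrac0 /tL. Qed.

Lemma letterE l : burau_letter l = sc ^+ (~~ l.2) *: M2 (QL l).
Proof.
case: l => [[] []].
- exact: letter_a1.
- exact: letter_A1.
- exact: letter_a2.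
- exact: letter_A2.
Qed.

Lemma rho3_cons l w : rho3 (l :: w) = burau_letter l *m rho3 w.
Proof. by []. Qed.

Lemma rho3E w : rho3 w = sc ^+ (kw w) *: M2 (Qw w).
Proof.
elim: w => [|l w IH]; first by rewrite expr0 scale1r M2_1.
rewrite rho3_cons IH letterE.
have -> : Qw (l :: w) = mul4 (QL l) (Qw w) by [].
have -> : kw (l :: w) = ((~~ l.2) + kw w)%N by [].
by rewrite M2_mul -scalemxAl -scalemxAr scalerA -exprD.
Qed.

Lemma Qw_c w : burauS w = 0 -> (Qw w).1.2 = 0.
Proof.
rewrite /burauS rho3E.
case: (Qw w) => [[[a b] c] d].
rewrite [M2 _]/= mxE mx2E => /eqP; rewrite mulf_eq0 expf_eq0 invr_eq0 oppr_eq0 (negbTE tL_neq0) andbF /=.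
by rewrite tofrac_eq0 => /eqP.
Qed.

Definition ev4 (Q : m4 P) : m4 int := let: (a, b, c, d) := Q in (a.[-1], b.[-1], c.[-1], d.[-1]).

Lemma ev4_mul Q R : ev4 (mul4 Q R) = mul4 (ev4 Q) (ev4 R).
Proof.
case: Q => [[[a b] c] d]; case: R => [[[a' b'] c'] d'].
by rewrite /= !hornerD !hornerM.
Qed.

Lemma ev4_Qw w : ev4 (Qw w) = phi w.
Proof.
elim: w => [|l w IH]; first by rewrite /= !hornerC.
have -> : Qw (l :: w) = mul4 (QL l) (Qw w) by [].
rewrite ev4_mul IH; congr (mul4 _ _).
case: l => [[] []] /=; by rewrite !hornerE.
Qed.

Lemma burau_phi w : burauS w = 0 -> (phi w).1.2 = 0.
Proof.
move=> /Qw_c; rewrite -ev4_Qw; case: (Qw w) => [[[a b] c] d] /= ->.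
by rewrite horner0.
Qed.


Theorem lemma1 (beta : word) :
  burauS beta = 0%R -> in_sub_s1_delta2 beta.
Proof.
move=> H. have [n Hn] := nf_exists beta.
have Hp : (phi (nfw n)).1.2 = 0 by rewrite -(phi_inv Hn); exact: burau_phi.
have [m [ds [E | E]]] := nf_shape Hp; rewrite E in Hn.
- have [l Hl] := shape1 m ds. exists l. exact: be_trans Hn Hl.
- have [l Hl] := shape2 m ds. exists l. exact: be_trans Hn Hl.
Qed.
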